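(* Let $T$ be a rooted binary tree with black/white-coloured leaves and the induced node colouring and classification as described in the context. Any SPR operation on $T$ belonging to the class $(\mathrm{B},\mathrm{r},\mathrm{W},\ast)$ or $(\mathrm{B},\mathrm{r},\mathrm{G},\ast)$ does not reduce the number of maximal black subtrees, i.e. the resulting tree has at least as many maximal black subtrees as $T$.
   Context: All trees are rooted binary trees; every non-leaf node has exactly two children and every non-root node $n$ has a parent $\mathrm{pa}(n)$. A ''subtree'' always means a node together with all of its descendants. Colouring: each leaf is coloured black (B) or white (W); an internal node is black if both children are black, white if both children are white, and grey (G) otherwise. A subtree is black (resp. white) if all its nodes are black (resp. white); it is maximal if no strictly larger subtree containing it is black (resp. white). Classification: a black or white node is of type ''r'' if it is the root of a maximal subtree of its own colour, and of type ''b'' otherwise; all grey nodes are of type ''b'' by convention. SPR operation $(u,v)$ on $T$: $u$ is a non-root node, $v$ is a node with $v\notin\{u,\mathrm{pa}(u)\}$ and $v$ not a descendant of $u$; the subtree rooted at $u$ is pruned (the edge to $u$ is removed and $\mathrm{pa}(u)$ deleted, its other child taking its place), then regrafted by inserting a new node on the edge from $v$ to its parent (or as a new root above $v$ if $v$ is the root) whose two children are $v$ and $u$; colours of the resulting tree are recomputed by the same rule. The operation belongs to class $(x,y,z,w)$ where $x,z\in\{\mathrm{B},\mathrm{W},\mathrm{G}\}$ are the colours in $T$ of $u$ and $v$, and $y,w\in\{\mathrm{r},\mathrm{b}\}$ their classifications in $T$; $\ast$ denotes any value. *)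

(* Defs.v *)
From HB Require Import structures.
From mathcomp Require Import all_boot.
Set Implicit Arguments. Unset Strict Implicit. Unset Printing Implicit Defensive.

(** Rooted binary trees whose leaves carry a colour: [true] = black, [false] = white.
    Nodes are identified by their position: the path from the root
    ([false] = go to left child, [true] = go to right child). *)
Inductive tree := Leaf of bool | Node of tree & tree.

Inductive colour := B | W | G.

Definition colour_eqb (a b : colour) : bool :=
  match a, b with B, B | W, W | G, G => true | _, _ => false end.
Lemma colour_eqP : Equality.axiom colour_eqb.
Proof. by case; case; constructor. Qed.
HB.instance Definition _ := hasDecEq.Build colour colour_eqP.

Fixpoint tcolour (t : tree) : colour :=
  match t with
  | Leaf true => B
  | Leaf false => W
  | Node l r =>
      match tcolour l, tcolour r with
      | B, B => B
      | W, W => W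
      | _, _ => G
      end
  end.

Fixpoint sub (t : tree) (p : seq bool) : option tree :=
  match p, t with
  | [::], _ => Some t
  | false :: p', Node l _ => sub l p'
  | true :: p', Node _ r => sub r p'
  | _ :: _, Leaf _ => None
  end.

Fixpoint nodes (t : tree) : seq (seq bool) :=
  [::] :: match t with
          | Leaf _ => [::]
          | Node l r => map (cons false) (nodes l) ++ map (cons true) (nodes r)
          end.

Definition ncolour (t : tree) (p : seq bool) : option colour :=
  omap tcolour (sub t p).

Definition mono (c : colour) (t : tree) (p : seq bool) : bool :=
  match sub t p with
  | Some s => all (fun q => ncolour s q == Some c) (nodes s)
  | None => false
  end.

Definition maximal_mono (c : colour) (t : tree) (p : seq bool) : bool :=
  mono c t p &&
  all (fun q => (prefix q p && (q != p)) ==> ~~ mono c t q) (nodes t).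

Definition type_r (t : tree) (p : seq bool) : bool :=
  match ncolour t p with
  | Some B => maximal_mono B t p
  | Some W => maximal_mono W t p
  | _ => false
  end.

Definition n_max_black (t : tree) : nat := count (maximal_mono B t) (nodes t).

Definition pa (p : seq bool) : seq bool := take (size p).-1 p.

(** pruning the subtree at u (u non-root): the parent of u is deleted and
    the sibling of u takes its place *)
Fixpoint prune (t : tree) (u : seq bool) : tree :=
  match u, t with
  | [:: b], Node l r => if b then l else r
  | b :: u', Node l r => if b then Node l (prune r u') else Node (prune l u') r
  | _, _ => t
  end.

(** position in the pruned tree of a node v of t (v not in the pruned
    subtree and v <> pa u) *)
Fixpoint prune_pos (u v : seq bool) : seq bool :=
  match u, v with
  | [:: _], _ :: v' => v'
  | b :: u', c :: v' => if b == c then c :: prune_pos u' v' else v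
  | _, _ => v
  end.

(** regrafting s: insert a new node on the edge above w (or a new root if
    w is the root), whose two children are (the subtree at) w and s *)
Fixpoint graft (t : tree) (w : seq bool) (s : tree) : tree :=
  match w, t with
  | [::], _ => Node t s
  | b :: w', Node l r => if b then Node l (graft r w' s) else Node (graft l w' s) r
  | _ :: _, Leaf _ => t
  end.

Definition spr_ok (t : tree) (u v : seq bool) : Prop :=
  [/\ u \in nodes t, u != [::], v \in nodes t, v != pa u & ~~ prefix u v].

Definition spr (t : tree) (u v : seq bool) : tree :=
  match sub t u with
  | Some s => graft (prune t u) (prune_pos u v) s
  | None => t
  end.

(* Main.v *)
Require Import Defs.
From mathcomp Require Import all_boot.

Fixpoint nmb (t : tree) : nat :=
  match t with
  | Leaf b => b
  | Node l r => if tcolour (Node l r) == B then 1 else nmb l + nmb r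
  end.

Lemma sub0 t : sub t [::] = Some t.
Proof. by case: t. Qed.

Lemma allB t : all (fun q => ncolour t q == Some B) (nodes t) = (tcolour t == B).
Proof.
elim: t => [b|l IHl r IHr]; first by rewrite /= /ncolour /= andbT.
rewrite [nodes _]/= [all _ (_ :: _)]/= all_cat !all_map.
rewrite (eq_all (a2 := fun q => ncolour l q == Some B)) //.
rewrite (eq_all (a1 := preim _ _) (a2 := fun q => ncolour r q == Some B)) //.
rewrite IHl IHr /ncolour /=.
by case: (tcolour l); case: (tcolour r).
Qed.

Lemma monoB0 t : mono B t [::] = (tcolour t == B).
Proof. by rewrite /mono sub0 allB. Qed.

Lemma monoE t p : mono B t p =
  if sub t p is Some x then tcolour x == B else false.
Proof.
rewrite /mono; case: (sub t p) => // x.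
exact: allB.
Qed.

Lemma mm0 t : maximal_mono B t [::] = mono B t [::].
Proof.
rewrite /maximal_mono; apply/andb_idr => _; apply/allP => q _.
by rewrite prefixs0; case: q.
Qed.

Lemma mmE l r b p : maximal_mono B (Node l r) (b :: p) =
  ~~ mono B (Node l r) [::] && maximal_mono B (if b then r else l) p.
Proof.
have Hcons : forall (P : pred (seq bool)) x s, all P (x :: s) = P x && all P s by [].
rewrite /maximal_mono {1}[nodes (Node l r)]/= Hcons all_cat !all_map prefix0s.
have -> : ([::] != b :: p) = true by [].
have E1 : mono B (Node l r) (b :: p) = mono B (if b then r else l) p.
  by rewrite !monoE; case: b.
rewrite E1.
have Hf : forall (c : bool) s, c != b ->
  all (preim (cons c) (fun q => prefix q (b :: p) && (q != b :: p) ==> ~~ mono B (Node l r) q)) s.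
  move=> c s Hc; apply/allP => q _ /=.
  by rewrite (negbTE Hc).
have Ht : forall s, all (preim (cons b) (fun q => prefix q (b :: p) && (q != b :: p) ==> ~~ mono B (Node l r) q)) s
  = all (fun q => prefix q p && (q != p) ==> ~~ mono B (if b then r else l) q) s.
  move=> s; apply: eq_all => q /=; rewrite eqxx /= eqseq_cons eqxx /=.
  by clear E1 Hf; rewrite !monoE; case: b.
case: b Hf Ht E1 => Hf Ht E1.
- rewrite (Hf false) // Ht /=.
  by case: (mono B r p); case: (mono B (Node l r) [::]).
- rewrite (Hf true) // Ht /= andbT.
  by case: (mono B l p); case: (mono B (Node l r) [::]).
Qed.

Lemma nmbB x : tcolour x == B -> nmb x = 1.
Proof. by case: x => [[]|l r] //= ->. Qed.

Arguments nmbB {x}.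

Lemma nmb_nB l r : tcolour (Node l r) != B -> nmb (Node l r) = nmb l + nmb r.
Proof. by move=> /= /negbTE ->. Qed.

Arguments nmb_nB {l r}.

Lemma nmax_nmb t : n_max_black t = nmb t.
Proof.
rewrite /n_max_black.
elim: t => [b|l IHl r IHr].
  by rewrite /= mm0 monoB0 /= addn0; case: b.
rewrite [nodes _]/= /= count_cat !count_map mm0 monoB0.
have Hc : forall (b : bool), count (preim (cons b) (maximal_mono B (Node l r))) (nodes (if b then r else l))
   = if tcolour (Node l r) == B then 0 else count (maximal_mono B (if b then r else l)) (nodes (if b then r else l)).
  move=> b; case HB: (tcolour (Node l r) == B).
    rewrite (eq_count (a2 := pred0)) ?count_pred0 // => q /=.
    by rewrite mmE monoB0 HB.
  by apply: eq_count => q /=; rewrite mmE monoB0 HB.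
have := Hc false; have := Hc true; rewrite /= => -> ->.
rewrite IHl IHr.
by case: (_ == B).
Qed.

Lemma mm_pa t u : u != [::] -> maximal_mono B t u -> ~~ mono B t (pa u).
Proof. Abort.

Lemma prune_lem u : forall t, u != [::] -> maximal_mono B t u ->
  nmb (prune t u) + 1 = nmb t /\ tcolour (prune t u) != B.
Proof.
elim: u => [|b u IH] t //= _.
case: t => [c|l r]; first by rewrite /maximal_mono monoE; case: b.
rewrite mmE monoB0 => /andP [HnB Hm].
case: u IH Hm => [|b' u'] IH Hm.
  rewrite mm0 monoB0 in Hm.
  move: HnB Hm; case: b => /= HnB Hm; rewrite (nmbB Hm); move: HnB;
    rewrite (eqP Hm) /=.
  - by case: (tcolour l) => //= _; rewrite addnC.
  - by case: (tcolour r) => //= _; rewrite addnC.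
have [IH1 IH2] := IH _ isT Hm.
rewrite (nmb_nB HnB).
have Hn : forall x y, tcolour x != B \/ tcolour y != B -> tcolour (Node x y) != B.
  move=> x y /= [] ; case: (tcolour x); case: (tcolour y) => //.
case: b Hm IH1 IH2 => Hm IH1 IH2; rewrite [prune _ _]/=.
- rewrite (nmb_nB (Hn _ _ (or_intror IH2))) -IH1 addnA; split=> //.
  by apply: Hn; right.
- rewrite (nmb_nB (Hn _ _ (or_introl IH2))) -IH1 addnAC; split=> //.
  by apply: Hn; left.
Qed.

Arguments prune_lem {u t}.

Definition nb (t : tree) (w : seq bool) : bool :=
  if sub t w is Some x then tcolour x != B else false.

Lemma nb_root w : forall t, nb t w -> tcolour t != B.
Proof.
elim: w => [|b w IH] t; first by rewrite /nb sub0.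
case: t => [c|l r]; first by case: b.
case: b => H.
- have := IH r H; rewrite /=.
  by case: (tcolour l); case: (tcolour r).
- have := IH l H; rewrite /=.
  by case: (tcolour l); case: (tcolour r).
Qed.

Lemma pos_lem u : forall t v, u != [::] -> maximal_mono B t u ->
  ~~ prefix u v -> v != pa u -> nb t v -> nb (prune t u) (prune_pos u v).
Proof.
elim: u => [|b u IH] t v //= _.
case: t => [c|l r]; first by rewrite /maximal_mono monoE; case: b.
move=> Hmm; have [_ HnB] := prune_lem (u := b :: u) isT Hmm.
move: Hmm; rewrite mmE => /andP [_ Hm].
case: u IH Hm HnB => [|b' u'] IH Hm HnB.
  case: v => [|c v'] //= Hp _.
  by rewrite prefix0s andbT in Hp; case: b c Hp {HnB Hm} => [] [].
case: v => [|c v'] Hp Hpa.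
  by rewrite /nb !sub0.
rewrite [prune_pos _ _]/=.
case: eqP => [Ebc|Nbc].
  subst c.
  have Hpa' : v' != pa (b' :: u').
    by apply: contra Hpa => /eqP ->.
  rewrite prefix_cons eqxx /= in Hp.
  move=> Hnb; have := IH _ v' isT Hm Hp Hpa'.
  by case: b Hnb Hm HnB Hpa {Hp} => Hnb Hm HnB Hpa H; apply: H.
by case: b c Nbc Hm HnB {Hp Hpa} => [] [] Nbc Hm HnB.
Qed.

Arguments pos_lem {u t v}.

Lemma graft_lem w : forall t s, tcolour s == B -> nb t w ->
  nmb (graft t w s) = nmb t + 1 /\ tcolour (graft t w s) = G.
Proof.
elim: w => [|b w IH] t s Hs.
  rewrite /nb sub0 => Ht.
  have HG : tcolour (Node t s) = G.
    by rewrite /= (eqP Hs); move: Ht; case: (tcolour t).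
  have -> : graft t [::] s = Node t s by case: t {Ht HG}.
  by rewrite nmb_nB ?HG // (nmbB Hs).
case: t => [c|l r]; first by case: b.
move=> Hnb.
have Hr := nb_root (b :: w) (Node l r) Hnb.
rewrite (nmb_nB Hr).
have HG : forall x y, tcolour y = G -> tcolour (Node x y) = G /\ tcolour (Node y x) = G.
  by move=> x y /= ->; case: (tcolour x).
case: b Hnb => Hnb; rewrite [graft _ _ _]/=.
- have [I1 I2] := IH r s Hs Hnb.
  have [H1 _] := HG l _ I2.
  by rewrite nmb_nB ?H1 // I1 addnA.
- have [I1 I2] := IH l s Hs Hnb.
  have [_ H1] := HG r _ I2.
  by rewrite nmb_nB ?H1 // I1 addnAC.
Qed.

Arguments graft_lem {w t} s.

Theorem lemma1 (t : tree) (u v : seq bool) :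
  spr_ok t u v ->
  ncolour t u = Some B -> type_r t u ->
  (ncolour t v = Some W \/ ncolour t v = Some G) ->
  n_max_black t <= n_max_black (spr t u v).
Proof.
case=> _ Hu0 _ Hpa Hpre Hcu; rewrite /type_r Hcu => Hmm Hcv.
move: Hcu; rewrite /ncolour /spr.
case Esu: (sub t u) => [s|] //= [Hs].
have Hnb : nb t v.
  rewrite /nb; move: Hcv; rewrite /ncolour.
  case: (sub t v) => [x|] /=; last by case.
  by case=> -[->].
have [P1 _] := prune_lem Hu0 Hmm.
have Hp := pos_lem Hu0 Hmm Hpre Hpa Hnb.
have [G1 _] := graft_lem s (introT eqP Hs) Hp.
by rewrite !nmax_nmb G1 P1.
Qed.
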